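(* Let $\mathcal{A}$ be a weighted pushdown system with state set $Q$ and stack alphabet $\Gamma$, and let $\pi$ be a finite path of $\mathcal{A}$ with additional stack height $\mathrm{ASH}(\pi) = d \geq (|Q|\cdot|\Gamma|)^2$. Then $\pi$ has a pumpable pair of paths.
   Context: A stack command over a finite alphabet $\Gamma$ is one of $\mathit{skip}$ (no change), $\mathit{pop}$ (delete top symbol), $\mathit{push}(z)$ for $z\in\Gamma$ (put $z$ on top). A weighted pushdown system (WPS) is $\mathcal{A}=\langle Q,\Gamma,q_0,E,w\rangle$ with finite state set $Q$, initial state $q_0\in Q$, finite stack alphabet $\Gamma$ containing a special bottom symbol $\bot$ that can be neither pushed nor popped, edge set $E\subseteq (Q\times\Gamma)\times(Q\times\mathrm{Com}(\Gamma))$ and integer weights $w:E\to\mathbb{Z}$. A configuration is a pair $(\alpha,q)$ with $\alpha\in\Gamma^+$ a stack string (top is the last symbol) and $q\in Q$; the initial configuration is $(\bot,q_0)$. $(\alpha',q')$ is a successor of $(\alpha,q)$ if there is an edge $(q,\gamma,q',\mathit{com})\in E$ with $\gamma$ the top symbol of $\alpha$ and $\alpha'=\mathit{com}(\alpha)$. A path is a (finite or infinite) sequence of configurations each of which is a successor of the previous one; equivalently it is a start configuration followed by the sequence of edges used. The stack height $\mathrm{SH}(\pi)$ of a finite path $\pi=\langle(\alpha_1,q_1),\dots,(\alpha_n,q_n)\rangle$ is $\max_i|\alpha_i|$, and its additional stack height is $\mathrm{ASH}(\pi)=\mathrm{SH}(\pi)-\max\{|\alpha_1|,|\alpha_n|\}$.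 For a path $\pi=\langle c_1 e_1 e_2\dots\rangle$, a pumpable pair is a pair $(p_1,p_2)$ of nonempty blocks of consecutive edges $p_1=e_{i_1}\dots e_{i_1+n_1}$, $p_2=e_{i_2}\dots e_{i_2+n_2}$ with $i_2>i_1+n_1$, such that for every $j\geq 0$ the sequence obtained from $\pi$ by replacing $p_1$ by $p_1^j$ and $p_2$ by $p_2^j$ (denoted $\pi^j_{(p_1,p_2)}$) is again a valid path from $c_1$. *)

(* Defs.v *)
From HB Require Import structures.
From mathcomp Require Import all_boot all_order all_algebra.
Set Implicit Arguments. Unset Strict Implicit. Unset Printing Implicit Defensive.

Inductive com (G : Type) := Skip | Pop | Push of G.
Arguments Skip {G}. Arguments Pop {G}.

Definition edge (Q G : Type) : Type := (Q * G * Q * com G)%type.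
Definition e_src {Q G : Type} (e : edge Q G) : Q := e.1.1.1.
Definition e_top {Q G : Type} (e : edge Q G) : G := e.1.1.2.
Definition e_dst {Q G : Type} (e : edge Q G) : Q := e.1.2.
Definition e_com {Q G : Type} (e : edge Q G) : com G := e.2.

Record wps (Q G : finType) := WPS {
  q0 : Q;
  bot : G;
  E : pred (edge Q G);
  w : edge Q G -> int;
  no_push_bot : forall e, E e -> e_com e <> Push bot;
  no_pop_bot : forall e, E e -> e_top e = bot -> e_com e <> Pop
}.

(* Configurations: (stack, state); the top of the stack is the LAST symbol. *)
Definition config (Q G : Type) : Type := (seq G * Q)%type.

Definition com_apply {G : Type} (c : com G) (s : seq G) : seq G :=
  match c with
  | Skip => s
  | Pop => take (size s).-1 s
  | Push z => rcons s z
  end.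

Definition next {Q G : Type} (c : config Q G) (e : edge Q G) : config Q G :=
  (com_apply (e_com e) c.1, e_dst e).

Definition enabled {Q G : finType} (A : wps Q G) (c : config Q G) (e : edge Q G) : Prop :=
  E A e /\ c.2 = e_src e /\ (exists s, c.1 = rcons s (e_top e))
  /\ (next c e).1 <> [::].

Fixpoint is_path {Q G : finType} (A : wps Q G) (c : config Q G) (es : seq (edge Q G)) : Prop :=
  match es with
  | [::] => c.1 <> [::]
  | e :: es' => enabled A c e /\ is_path A (next c e) es'
  end.

Definition configs {Q G : Type} (c : config Q G) (es : seq (edge Q G)) : seq (config Q G) :=
  c :: scanl next c es.

Definition SH {Q G : Type} (c : config Q G) (es : seq (edge Q G)) : nat :=
  \max_(x <- configs c es) size x.1.

Definition ASH {Q G : Type} (c : config Q G) (es : seq (edge Q G)) : nat :=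
  SH c es - maxn (size c.1) (size (last c (configs c es)).1).

Definition pumpable_pair {Q G : finType} (A : wps Q G) (c : config Q G)
    (es p1 p2 : seq (edge Q G)) : Prop :=
  p1 <> [::] /\ p2 <> [::] /\
  exists u v x, es = u ++ p1 ++ v ++ p2 ++ x /\
    forall j : nat,
      is_path A c (u ++ flatten (nseq j p1) ++ v ++ flatten (nseq j p2) ++ x).

(* Main.v *)
Require Import Defs.
Set Implicit Arguments. Unset Strict Implicit.
From HB Require Import structures.
From mathcomp Require Import all_boot all_order all_algebra.
From mathcomp Require Import zify.
Require Import Defs.
Set Implicit Arguments. Unset Strict Implicit.

Lemma com_cat (G : Type) (cm : com G) (s t : seq G) :
  t <> [::] -> com_apply cm (s ++ t) = s ++ com_apply cm t.
Proof.
case: cm => //= [|z]; last by rewrite rcons_cat.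
move=> tn. rewrite size_cat take_cat.
have ht : 0 < size t by case: t tn.
rewrite ifF; last by apply/negbTE; rewrite -leqNgt; lia.
congr (_ ++ take _ t); lia.
Qed.

Lemma top_lem (G : Type) (s t s0 : seq G) x :
  s ++ t = rcons s0 x -> t <> [::] -> exists s1, t = rcons s1 x.
Proof.
case/lastP: t => [//|t1 a]. rewrite -rcons_cat => /rcons_inj [_ ->] _; by exists t1.
Qed.

Lemma com_head (G : Type) (cm : com G) x t :
  com_apply cm (x :: t) <> [::] -> exists t', com_apply cm (x :: t) = x :: t'.
Proof.
case: t => [|y t].
  case: cm => [||z] /=; [by exists [::] | by [] | by exists [:: z]].
move=> _; rewrite -cat1s com_cat //; by eexists.
Qed.

Lemma cat_nn (T : Type) (s t : seq T) : t <> [::] -> s ++ t <> [::].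
Proof. by case: s. Qed.

Lemma path_nonempty (Q G : finType) (A : wps Q G) (c : config Q G) es : is_path A c es -> c.1 <> [::].
Proof. case: es => [//|e es] /= [[_ [_ [[s ->] _]]] _]; by case: s. Qed.

Lemma path_cat (Q G : finType) (A : wps Q G) (a b : seq (edge Q G)) : forall c : config Q G,
  is_path A c (a ++ b) <-> is_path A c a /\ is_path A (foldl next c a) b.
Proof.
elim: a => [|e a IH] c /=.
  split; [move=> h; split => //; exact: path_nonempty h | by case].
rewrite IH; tauto.
Qed.

Lemma frame (Q G : finType) (A : wps Q G) (es : seq (edge Q G)) : forall s t (q : Q), is_path A (t,q) es ->
  is_path A (s ++ t, q) es /\
  foldl next (s ++ t, q) es = (s ++ (foldl next (t,q) es).1, (foldl next (t,q) es).2).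
Proof.
elim: es => [|e es IH] s t q /=.
  move=> ht; split => //; case: s => //=.
move=> [[hE [hq [[s0 hs] hn]]] hp].
have tn : t <> [::] by move=> ht; move: hs; rewrite ht /=; case: s0.
have hnx : next (s ++ t, q) e = (s ++ (next (t,q) e).1, (next (t,q) e).2).
  by rewrite /next /= com_cat.
have hp' : is_path A ((next (t,q) e).1, (next (t,q) e).2) es by rewrite -surjective_pairing.
have [IH1 IH2] := IH s _ _ hp'.
rewrite -surjective_pairing in IH2.
rewrite hnx IH2; split => //; split => //; split => //; split => //; split.
  by exists (s ++ s0); move: hs => /= ->; rewrite rcons_cat.
by rewrite hnx /=; apply: cat_nn.
Qed.

Lemma head_pres (Q G : finType) (A : wps Q G) (es : seq (edge Q G)) : forall x t (q : Q), is_path A (x :: t, q) es ->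
  exists t', (foldl next (x :: t, q) es).1 = x :: t'.
Proof.
elim: es => [|e es IH] x t q /=; first by exists t.
move=> [[_ [_ [_ hn]]] hp]; move: hn hp; rewrite /next /= => hn hp.
have [t' ht'] := com_head hn. rewrite ht' in hp *. exact: IH hp.
Qed.

Lemma SH_nil (Q G : Type) (c : config Q G) : SH c [::] = size c.1.
Proof. by rewrite /SH /configs /= big_cons big_nil maxn0. Qed.

Lemma SH_cons (Q G : Type) (c : config Q G) e es :
  SH c (e :: es) = maxn (size c.1) (SH (next c e) es).
Proof. by rewrite /SH /configs /= big_cons. Qed.

Lemma SH_ge (Q G : Type) (c : config Q G) es : size c.1 <= SH c es.
Proof. by case: es => [|e es]; rewrite ?SH_nil ?SH_cons ?leq_maxl. Qed.

Lemma SH_cat (Q G : Type) (a b : seq (edge Q G)) : forall c : config Q G,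
  SH c (a ++ b) = maxn (SH c a) (SH (foldl next c a) b).
Proof.
elim: a => [|e a IH] c /=.
  by rewrite SH_nil; apply/esym/maxn_idPr/SH_ge.
by rewrite !SH_cons IH maxnA.
Qed.

Lemma SH_frame (Q G : finType) (A : wps Q G) (es : seq (edge Q G)) :
  forall s t (q : Q), is_path A (t, q) es -> SH (s ++ t, q) es = size s + SH (t, q) es.
Proof.
elim: es => [|e es IH] s t q /=.
  by move=> _; rewrite !SH_nil size_cat.
move=> [[hE [hq [[s0 hs] hn]]] hp].
have tn : t <> [::] by move=> ht; move: hs; rewrite ht /=; case: s0.
have hnx : next (s ++ t, q) e = (s ++ (next (t,q) e).1, (next (t,q) e).2).
  by rewrite /next /= com_cat.
have hp' : is_path A ((next (t,q) e).1, (next (t,q) e).2) es by rewrite -surjective_pairing.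
rewrite !SH_cons hnx IH // -surjective_pairing /= size_cat addn_maxr //.
Qed.

Lemma last_scanl (Q G : Type) (es : seq (edge Q G)) : forall c : config Q G,
  last c (scanl next c es) = foldl next c es.
Proof. by elim: es => [|e es IH] c //=. Qed.

Lemma last_configs (Q G : Type) (c : config Q G) es :
  last c (configs c es) = foldl next c es.
Proof. by rewrite /configs /= last_scanl. Qed.

Lemma split_return (Q G : finType) (A : wps Q G) (es : seq (edge Q G)) :
  forall s t (q : Q), is_path A (s ++ t, q) es -> t <> [::] ->
  size (foldl next (s ++ t, q) es).1 <= size s ->
  exists es1 e es2 y q1, es = es1 ++ e :: es2 /\ is_path A (t, q) es1 /\
    foldl next (t, q) es1 = ([:: y], q1) /\ e_com e = Pop.
Proof.
elim: es => [|e es IH] s t q /=.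
  move=> _ tn; rewrite size_cat; case: t tn => //= a t _; lia.
move=> [[hE [hq [[s0 hs] hn]]] hp] tn hsz.
have hnx : next (s ++ t, q) e = (s ++ (next (t,q) e).1, (next (t,q) e).2).
  by rewrite /next /= com_cat.
rewrite hnx in hp hsz.
case ht': ((next (t,q) e).1) => [|a t''].
  rewrite /next /= in ht'; case Hc: (e_com e) ht' => [||z] //= ht.
  - have [y ->] : exists y, t = [:: y].
      by case: (t) tn ht => [//|y [|y' t0]] //= _ _; exists y.
    by exists [::], e, es, y, q.
  - by case: (t) ht.
rewrite ht' in hp hsz.
have [es1 [e2 [es2 [y [q1 [h1 [h2 [h3 h4]]]]]]]] := IH _ _ _ hp ltac:(done) hsz.
exists (e :: es1), e2, es2, y, q1; rewrite h1; split => //; split; last first.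
  by rewrite /= -h3 (surjective_pairing (next (t,q) e)) ht'.
split; last by rewrite (surjective_pairing (next (t,q) e)) ht'.
split => //; split => //; split; last by rewrite ht'.
have [s1 ->] := top_lem hs tn; by exists s1.
Qed.

Definition hill (Q G : finType) (A : wps Q G) (z : G) (q : Q) (es : seq (edge Q G)) (r : Q) :=
  is_path A ([:: z], q) es /\ foldl next ([:: z], q) es = ([:: z], r).

Lemma size_next_le (Q G : Type) (c : config Q G) e :
  (forall z, e_com e <> Push z) -> size (next c e).1 <= size c.1.
Proof.
rewrite /next /=; case: (e_com e) => [||z] //= h; last by case: (h z).
rewrite size_take; case: ifP => //; lia.
Qed.

Lemma top_hill (Q G : finType) (A : wps Q G) n : forall es (c : config Q G) k,
  size es <= n -> is_path A c es -> size c.1 <= k -> size (foldl next c es).1 <= k ->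
  k < SH c es ->
  exists u es' x b z q r, es = u ++ es' ++ x /\ size b = k /\ is_path A c u /\
    foldl next c u = (rcons b z, q) /\ hill A z q es' r /\ is_path A (rcons b z, r) x /\
    SH c es <= k + SH ([:: z], q) es'.
Proof.
elim: n => [|n IH] [|e es] [st qc] k //=; rewrite ?SH_nil /=; try lia.
move=> hsz [hen hp] hc hf hk.
rewrite SH_cons /= in hk.
case: (leqP (size (next (st, qc) e).1) k) => hk2.
  have hk3 : k < SH (next (st, qc) e) es by lia.
  have [u [es' [x [b [z [q [r [h1 [h2 [h3 [h4 [h5 [h6 h7]]]]]]]]]]]]] :=
    IH es _ k hsz hp hk2 hf hk3.
  exists (e :: u), es', x, b, z, q, r; rewrite h1; do 6! split => //.
  rewrite SH_cons -h1 /=; lia.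
have [z1 Hc] : exists z1, e_com e = Push z1.
  case Hc: (e_com e) => [||z1]; last by exists z1.
  - move: hk2; rewrite /next /= Hc /=; lia.
  - have h : size (next (st, qc) e).1 <= size st := @size_next_le _ _ (st, qc) e ltac:(by rewrite Hc); lia.
have hnx : next (st, qc) e = (st ++ [:: z1], e_dst e) by rewrite /next /= Hc cats1.
rewrite hnx /= size_cat /= in hk2.
have hst : size st = k by lia.
rewrite hnx in hp hf.
have [es1 [e2 [es2 [y [q1 [h1 [h2 [h3 h4]]]]]]]] :=
  split_return hp ltac:(done) ltac:(by rewrite hst).
have [t' ht'] := head_pres h2. rewrite h3 /= in ht'. case: ht' => hy _; subst y.
have [fr1 fr2] := frame st h2. rewrite h3 /= in fr2.
rewrite h1 in hp hf.
move: (hp) => /path_cat [_]; rewrite fr2 /= => -[hen2 hp2].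
have hnx2 : next (st ++ [:: z1], q1) e2 = (st, e_dst e2).
  by rewrite /next /= h4 /= size_cat addn1 /= take_size_cat.
rewrite hnx2 in hp2.
have hSH : SH (st ++ [:: z1], e_dst e) (es1 ++ e2 :: es2) =
    maxn (k + SH ([:: z1], e_dst e) es1) (maxn (k.+1) (SH (st, e_dst e2) es2)).
  by rewrite SH_cat fr2 SH_cons hnx2 (SH_frame st h2) /= size_cat hst /= addn1.
have hr1 := SH_ge ([:: z1], e_dst e) es1. rewrite /= in hr1.
case: (leqP (SH (st, e_dst e2) es2) (k + SH ([:: z1], e_dst e) es1)) => hcase.
  exists [:: e], es1, (e2 :: es2), st, z1, (e_dst e), q1.
  rewrite h1 -cats1; split => //; split => //; split.
    by split => //; rewrite hnx /=; exact: cat_nn.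
  split; first by rewrite /= hnx.
  split; first by split.
  split; first by split => //; rewrite hnx2.
  rewrite SH_cons hnx hSH /=; lia.
have hf2 : size (foldl next (st, e_dst e2) es2).1 <= k.
  by move: hf; rewrite foldl_cat fr2 /= hnx2.
have hsz2 : size es2 <= n by move: hsz; rewrite h1 size_cat /=; lia.
have [u [es' [x [b [z [q [r [g1 [g2 [g3 [g4 [g5 [g6 g7]]]]]]]]]]]]] :=
  IH es2 (st, e_dst e2) k hsz2 hp2 ltac:(by rewrite /= hst) hf2 ltac:(lia).
exists (e :: es1 ++ e2 :: u), es', x, b, z, q, r.
rewrite h1 g1 /= -catA /=; do 2! split => //; split; last split; last split => //.
- split => //; rewrite hnx; apply/path_cat; split => //; rewrite fr2 /=.
  by split => //; rewrite hnx2.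
- by rewrite hnx foldl_cat fr2 /= hnx2.
split => //.
rewrite -g1 -h1 SH_cons hnx /= h1 hSH; lia.
Qed.

Definition hsub (Q G : finType) (A : wps Q G) z (q : Q) es (r : Q) z' (q' : Q) es' (r' : Q) :=
  hill A z' q' es' r' /\ exists U X g, U <> [::] /\ X <> [::] /\ es = U ++ es' ++ X /\
   is_path A ([:: z], q) U /\ foldl next ([:: z], q) U = (rcons g z', q') /\
   is_path A (rcons g z', r') X /\ foldl next (rcons g z', r') X = ([:: z], r).

Lemma peel (Q G : finType) (A : wps Q G) n z q es r :
  hill A z q es r -> n.+1 < SH ([:: z], q) es ->
  exists z' q' es' r', hsub A z q es r z' q' es' r' /\ n < SH ([:: z'], q') es'.
Proof.
move=> [hp hf] hn.
have [u [es' [x [b [z1 [q1 [r1 [h1 [h2 [h3 [h4 [[h5a h5b] [h6 h7]]]]]]]]]]]]] :=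
  @top_hill _ _ A (size es) es ([:: z], q) 1 (leqnn _) hp (leqnn 1)
    ltac:(by rewrite hf) ltac:(lia).
have [t' ht] := head_pres h3. rewrite h4 /= in ht.
have hb : b = [:: z] by case: b h2 ht {h4 h6} => [|b0 [|b1 b']] //= _ [->].
subst b.
have fr := (frame [:: z] h5a).2. rewrite h5b /= in fr.
move: hf; rewrite h1 !foldl_cat h4 /= fr /= => hf.
exists z1, q1, es', r1; split; last by move: h7; rewrite /=; lia.
split; first by split.
exists u, x, [:: z]; split; first by move=> hu; move: h4; rewrite hu.
split; first by move=> hx; move: hf; rewrite hx.
done.
Qed.

Lemma hsub_trans (Q G : finType) (A : wps Q G) z1 q1 e1 r1 z2 q2 e2 r2 z3 q3 e3 r3 :
  hsub A z1 q1 e1 r1 z2 q2 e2 r2 -> hsub A z2 q2 e2 r2 z3 q3 e3 r3 ->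
  hsub A z1 q1 e1 r1 z3 q3 e3 r3.
Proof.
move=> [_ [U1 [X1 [g1 [nU1 [nX1 [E1 [pU1 [fU1 [pX1 fX1]]]]]]]]]]
       [hl3 [U2 [X2 [g2 [nU2 [nX2 [E2 [pU2 [fU2 [pX2 fX2]]]]]]]]]].
split => //. exists (U1 ++ U2), (X2 ++ X1), (g1 ++ g2).
split; first by case: (U1) nU1.
split; first exact: cat_nn.
split; first by rewrite E1 E2 -!catA.
split; first by apply/path_cat; split => //; rewrite fU1 -cats1; exact: (frame g1 pU2).1.
split; first by rewrite foldl_cat fU1 -cats1 (frame g1 pU2).2 fU2 /= rcons_cat.
split.
  rewrite rcons_cat; apply/path_cat; split; first exact: (frame g1 pX2).1.
  by rewrite (frame g1 pX2).2 fX2 /= cats1.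
by rewrite rcons_cat foldl_cat (frame g1 pX2).2 fX2 /= cats1.
Qed.

Definition emb (Q G : finType) (A : wps Q G) (c : config Q G) es z (q : Q) es' (r : Q) :=
  exists u x b, es = u ++ es' ++ x /\ is_path A c u /\ foldl next c u = (rcons b z, q) /\
    is_path A (rcons b z, r) x.

Lemma emb_sub (Q G : finType) (A : wps Q G) c es z q e1 r z' q' e' r' :
  emb A c es z q e1 r -> hsub A z q e1 r z' q' e' r' -> emb A c es z' q' e' r'.
Proof.
move=> [u [x [b [E0 [pu [fu px]]]]]] [_ [U [X [g [_ [_ [E1 [pU [fU [pX fX]]]]]]]]]].
exists (u ++ U), (X ++ x), (b ++ g).
split; first by rewrite E0 E1 -!catA.
split; first by apply/path_cat; split => //; rewrite fu -cats1; exact: (frame b pU).1.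
split; first by rewrite foldl_cat fu -cats1 (frame b pU).2 fU /= rcons_cat.
rewrite rcons_cat; apply/path_cat; split; first exact: (frame b pX).1.
by rewrite (frame b pX).2 fX /= cats1.
Qed.

Lemma flatten_nseqS (T : Type) (s : seq T) j :
  flatten (nseq j.+1 s) = flatten (nseq j s) ++ s.
Proof.
elim: j => [|j IH]; first by rewrite /= cats0.
have -> : flatten (nseq j.+2 s) = s ++ flatten (nseq j.+1 s) by [].
by rewrite {1}IH catA.
Qed.

Lemma pumpU (Q G : finType) (A : wps Q G) z (q : Q) U g j : forall b,
  is_path A ([:: z], q) U -> foldl next ([:: z], q) U = (rcons g z, q) ->
  is_path A (b ++ [:: z], q) (flatten (nseq j U)) /\
  foldl next (b ++ [:: z], q) (flatten (nseq j U)) = (b ++ flatten (nseq j g) ++ [:: z], q).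
Proof.
elim: j => [|j IH] b pU fU /=; first by split => //; exact: cat_nn.
have [f1 f2] := frame b pU. rewrite fU /= -cats1 catA in f2.
have [i1 i2] := IH (b ++ g) pU fU.
split; first by apply/path_cat; rewrite f2.
by rewrite foldl_cat f2 i2 !catA.
Qed.

Lemma pumpX (Q G : finType) (A : wps Q G) z (r : Q) X g j : forall b,
  is_path A (rcons g z, r) X -> foldl next (rcons g z, r) X = ([:: z], r) ->
  is_path A ((b ++ flatten (nseq j g)) ++ [:: z], r) (flatten (nseq j X)) /\
  foldl next ((b ++ flatten (nseq j g)) ++ [:: z], r) (flatten (nseq j X)) = (b ++ [:: z], r).
Proof.
elim: j => [|j IH] b pX fX /=; first by rewrite cats0; split => //; exact: cat_nn.
have [f1 f2] := frame (b ++ flatten (nseq j g)) pX. rewrite fX /= in f2.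
have [i1 i2] := IH b pX fX.
have -> : (b ++ g ++ flatten (nseq j g)) ++ [:: z] = (b ++ flatten (nseq j g)) ++ rcons g z.
  have e : g ++ flatten (nseq j g) = flatten (nseq j g) ++ g by rewrite -flatten_nseqS.
  by rewrite e -cats1 !catA.
split; first by apply/path_cat; rewrite f2.
by rewrite foldl_cat f2 i2.
Qed.

Lemma pump (Q G : finType) (A : wps Q G) c es z q e1 r v :
  emb A c es z q e1 r -> hsub A z q e1 r z q v r -> exists p1 p2, pumpable_pair A c es p1 p2.
Proof.
move=> [u [x [b [E0 [pu [fu px]]]]]] [[hv1 hv2] [U [X [g [nU [nX [E1 [pU [fU [pX fX]]]]]]]]]].
exists U, X; split => //; split => //; exists u, v, x; split.
  by rewrite E0 E1 -!catA.
move=> j.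
have [a1 a2] := pumpU j b pU fU.
have [c1 c2] := pumpX j b pX fX.
have [v1 v2] := frame (b ++ flatten (nseq j g)) hv1. rewrite hv2 /= in v2.
apply/path_cat; split => //; rewrite fu -cats1.
apply/path_cat; split => //; rewrite a2 catA.
apply/path_cat; split => //; rewrite v2.
apply/path_cat; split => //; rewrite c2 cats1 //.
Qed.

Definition good (Q G : finType) (A : wps Q G) z (q : Q) es (r : Q) :=
  exists z1 q1 es1 r1 es2, ((z1, q1, es1, r1) = (z, q, es, r) \/ hsub A z q es r z1 q1 es1 r1)
    /\ hsub A z1 q1 es1 r1 z1 q1 es2 r1.

Definition reach (Q G : finType) (A : wps Q G) z (q : Q) es (r : Q) (t : G * Q * Q) :=
  exists z1 q1 es1 r1, ((z1, q1, es1, r1) = (z, q, es, r) \/ hsub A z q es r z1 q1 es1 r1)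
    /\ t = (z1, q1, r1).

Lemma chain (Q G : finType) (A : wps Q G) n : forall z q es r,
  hill A z q es r -> n < SH ([:: z], q) es ->
  good A z q es r \/ exists s : seq (G * Q * Q), uniq s /\ size s = n.+1 /\
    (forall t, t \in s -> reach A z q es r t).
Proof.
elim: n => [|n IH] z q es r hh hn.
  right; exists [:: (z, q, r)]; split => //; split => // t; rewrite inE => /eqP ->.
  by exists z, q, es, r; split => //; left.
have [z' [q' [es' [r' [hs hn']]]]] := peel hh hn.
have hh' : hill A z' q' es' r' by case: hs.
case: (IH _ _ _ _ hh' hn') => [[z1 [q1 [es1 [r1 [es2 [hor hs2]]]]]] | [s [us [ss hall]]]].
  left; exists z1, q1, es1, r1, es2; split => //; right.
  case: hor => [[-> -> -> ->] // | h]; exact: hsub_trans hs h.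
have up : forall z1 q1 es1 r1,
    ((z1, q1, es1, r1) = (z', q', es', r') \/ hsub A z' q' es' r' z1 q1 es1 r1) ->
    hsub A z q es r z1 q1 es1 r1.
  by move=> z1 q1 es1 r1 [[-> -> -> ->] // | h]; exact: hsub_trans hs h.
case: (boolP ((z, q, r) \in s)) => hin.
  have [z1 [q1 [es1 [r1 [hor ht]]]]] := hall _ hin.
  case: ht => ? ? ?; subst z1 q1 r1.
  left; exists z, q, es, r, es1; split; first by left.
  exact: up.
right; exists ((z, q, r) :: s); split; first by rewrite /= hin us.
split; first by rewrite /= ss.
move=> t; rewrite inE => /orP [/eqP -> | ht].
  by exists z, q, es, r; split => //; left.
have [z1 [q1 [es1 [r1 [hor ->]]]]] := hall _ ht.
exists z1, q1, es1, r1; split => //; right; exact: up.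
Qed.

Lemma exists_push (Q G : finType) (A : wps Q G) es : forall c : config Q G,
  is_path A c es -> size c.1 < SH c es -> exists e z, E A e /\ e_com e = Push z.
Proof.
elim: es => [|e es IH] c /=; first by rewrite SH_nil ltnn.
move=> [hen hp]; rewrite SH_cons.
case Hc: (e_com e) => [||z]; last by exists e, z; split => //; case: hen.
- move=> h; apply: (IH _ hp).
  have : size (next c e).1 <= size c.1 by apply: size_next_le; rewrite Hc.
  lia.
- move=> h; apply: (IH _ hp).
  have : size (next c e).1 <= size c.1 by apply: size_next_le; rewrite Hc.
  lia.
Qed.

Unset Implicit Arguments.

Theorem lemma1 (Q G : finType) (A : wps Q G) (c : config Q G) (es : seq (edge Q G)) :
  is_path A c es ->
  (#|Q| * #|G|) ^ 2 <= ASH c es ->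
  exists p1 p2, pumpable_pair A c es p1 p2.
Proof.
move=> hp hD.
set m := maxn (size c.1) (size (foldl next c es).1).
have hA : ASH c es = SH c es - m by rewrite /ASH last_configs.
have hQ : 0 < #|Q| by apply/card_gt0P; exists c.2.
have hcn := path_nonempty hp.
have hG : 0 < #|G|.
  case Ec: (c.1) hcn => [//|g0 s0] _; apply/card_gt0P; by exists g0.
rewrite hA expnS expn1 in hD.
have hm : m < SH c es.
  have : 0 < #|Q| * #|G| * (#|Q| * #|G|) by rewrite !muln_gt0 hQ hG.
  lia.
have [e0 [z0 [hE0 hc0]]] : exists e z, E A e /\ e_com e = Push z.
  apply: (exists_push hp); rewrite /m in hm; lia.
have hG2 : 1 < #|G|.
  have hz : z0 != bot A by apply/eqP => hz; apply: (no_push_bot hE0); rewrite hc0 hz.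
  have := max_card (mem [set z0; bot A]); rewrite cards2 hz //.
have [u [es' [x [b [z [q [r [h1 [h2 [h3 [h4 [h5 [h6 h7]]]]]]]]]]]]] :=
  @top_hill _ _ A (size es) es c m (leqnn _) hp (leq_maxl _ _) (leq_maxr _ _) hm.
have hemb : emb A c es z q es' r by exists u, x, b.
have hn : #|G| * #|Q| * #|Q| < SH ([:: z], q) es'.
  have : #|G| * #|Q| * #|Q| < #|Q| * #|G| * (#|Q| * #|G|) by nia.
  lia.
case: (chain h5 hn) => [[z1 [q1 [es1 [r1 [es2 [hor hs2]]]]]] | [s [us [ss _]]]].
  have hemb1 : emb A c es z1 q1 es1 r1.
    by case: hor => [[-> -> -> ->] // | h]; exact: emb_sub hemb h.
  exact: pump hemb1 hs2.
have := max_card (mem s); rewrite (card_uniqP us) ss !card_prod.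
lia.
Qed.
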